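(* Let $d\ge 1$ and let $\mathcal S:\mathbb C^d\to\mathcal H$ be a map into a real Hilbert space $\mathcal H$ satisfying: (i) $\mathcal S$ is real-linear: $\mathcal S(a|\phi\rangle+b|\psi\rangle)=a\,\mathcal S(|\phi\rangle)+b\,\mathcal S(|\psi\rangle)$ for all $|\phi\rangle,|\psi\rangle\in\mathbb C^d$, $a,b\in\mathbb R$; (ii) there is a real representation $g$ of $\mathrm{SO}(2)$ on $\mathcal H$ such that $\mathcal S(e^{i\alpha}|\psi\rangle)=g(R_\alpha)\,\mathcal S(|\psi\rangle)$ for all $|\psi\rangle$ and all $\alpha\in\mathbb R$, where $R_\alpha\in\mathrm{SO}(2)$ is the rotation by angle $\alpha$; (iii) if $\langle\phi|\psi\rangle=0$ then $\mathcal S(|\phi\rangle)^T\mathcal S(|\psi\rangle)=0$, and if $\langle\phi|\psi\rangle=1$ then $\mathcal S(|\phi\rangle)^T\mathcal S(|\psi\rangle)=1$; (iv) $\mathcal S$ is surjective onto $\mathcal H$. Then $\mathcal H\cong\mathbb R^d\otimes\mathbb R^2$ (as real Hilbert spaces), and there exist an orthonormal basis $\{|e_j\rangle\}_{j=1}^d$ of $\mathbb C^d$ and an orthonormal basis $\{|\tilde e_j\rangle\otimes|0\rangle_F,\ |\tilde e_j\rangle\otimes|1\rangle_F\}_{j=1}^d$ of $\mathcal H\cong\mathbb R^d\otimes\mathbb R^2$ such that for all $c_1,\dots,c_d\in\mathbb C$, $$\mathcal S\Big(\sum_{j=1}^d c_j|e_j\rangle\Big)=\sum_{j=1}^d\big[\mathrm{Re}(c_j)\,|\tilde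 e_j\rangle\otimes|0\rangle_F+\mathrm{Im}(c_j)\,|\tilde e_j\rangle\otimes|1\rangle_F\big].$$
   Context: $\{|0\rangle_F,|1\rangle_F\}$ denotes the standard orthonormal basis of the second factor $\mathbb R^2$ (the ''flag''). For real vectors, $v^T w$ is the real inner product. *)

(* Defs.v *)
From HB Require Import structures.
From mathcomp Require Import all_boot all_order all_algebra.
From mathcomp Require Import reals trigo.
From mathcomp Require Import complex.

Set Implicit Arguments.
Unset Strict Implicit.
Unset Printing Implicit Defensive.
Import Order.TTheory GRing.Theory Num.Theory.
Local Open Scope ring_scope.

Section Defs.
Variable R : realType.

Definition cip (d : nat) (phi psi : 'cV[R[i]]_d) : R[i] :=
  \sum_(j < d) conjc (phi j 0) * psi j 0.

Definition eiang (a : R) : R[i] := Complex (cos a) (sin a).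

Definition cONB (d : nat) (e : 'I_d -> 'cV[R[i]]_d) : Prop :=
  (forall i j, cip (e i) (e j) = (i == j)%:R) /\
  (forall v : 'cV[R[i]]_d, exists c : 'I_d -> R[i], v = \sum_(j < d) c j *: e j).

Definition rONB (d : nat) (e : 'I_d -> 'cV[R]_d) : Prop :=
  (forall i j, \sum_(k < d) e i k 0 * e j k 0 = (i == j)%:R) /\
  (forall v : 'cV[R]_d, exists c : 'I_d -> R, v = \sum_(j < d) c j *: e j).

(* R^d (x) R^2 is realised as 'M[R]_(d,2), with v (x) w := v w^T and the
   (Frobenius) inner product, which is the tensor-product inner product. *)
Definition tensor (d : nat) (v : 'cV[R]_d) (w : 'cV[R]_2) : 'M[R]_(d, 2) :=
  v *m w^T.

Definition tens_ip (d : nat) (A B : 'M[R]_(d, 2)) : R :=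
  \sum_(i < d) \sum_(k < 2) A i k * B i k.

Definition ketF (k : 'I_2) : 'cV[R]_2 := delta_mx k 0.

Definition is_real_hilbert (H : lmodType R) (ip : H -> H -> R) : Prop :=
  [/\ (forall x y, ip x y = ip y x),
      (forall a x y z, ip (a *: x + y) z = a * ip x z + ip y z),
      (forall x, 0 <= ip x x),
      (forall x, ip x x = 0 -> x = 0) &
      (forall u : nat -> H,
         (forall eps : R, 0 < eps -> exists N : nat, forall m n : nat,
             (N <= m)%N -> (N <= n)%N -> ip (u m - u n) (u m - u n) < eps) ->
         exists l : H, forall eps : R, 0 < eps -> exists N : nat,
             forall n : nat, (N <= n)%N -> ip (u n - l) (u n - l) < eps)].

Definition is_SO2 (M : 'M[R]_2) : Prop := M^T *m M = 1%:M /\ \det M = 1.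

Definition rotation2 (a : R) : 'M[R]_2 :=
  \matrix_(i < 2, j < 2)
    if i == j then cos a else if i == 0 then - sin a else sin a.

Definition is_SO2_rep (H : lmodType R) (ip : H -> H -> R)
    (g : 'M[R]_2 -> H -> H) : Prop :=
  [/\ (forall M, is_SO2 M ->
         forall (a : R) (x y : H), g M (a *: x + y) = a *: g M x + g M y),
      (forall x, g 1%:M x = x),
      (forall M N, is_SO2 M -> is_SO2 N -> forall x, g (M *m N) x = g M (g N x)) &
      (forall M, is_SO2 M -> forall (x : H) (eps : R), 0 < eps ->
         exists delta : R, 0 < delta /\ forall N, is_SO2 N ->
           (forall i j, `|N i j - M i j| < delta) ->
           ip (g N x - g M x) (g N x - g M x) < eps)].

End Defs.

(* Main.v *)
Require Import Defs.
From HB Require Import structures.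
From mathcomp Require Import all_boot all_order all_algebra.
From mathcomp Require Import reals trigo.
From mathcomp Require Import complex.
Import Order.TTheory GRing.Theory Num.Theory.
Local Open Scope ring_scope.

From mathcomp Require Import ring lra.
Section Helpers.

Variable R : realType.
Lemma decC (c : R[i]) : c = ((complex.Re c)%:C + (complex.Im c)%:C * 'i%C)%C.
Proof. case: c => a b /=. apply/eqP; rewrite eq_complex /=. by simpc. Qed.
Lemma cipE d (a b : R[i]) (j k : 'I_d) :
  cip (a *: delta_mx j 0) (b *: delta_mx k 0) = (conjc a * b) * (j == k)%:R.
Proof.
rewrite /cip (bigD1 j) //= big1 ?addr0.
  by rewrite !mxE !eqxx /= andbT mulr1 mulrA.
move=> l /negbTE; rewrite !mxE => ->. by rewrite mulr0 conjc0 mul0r.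
Qed.
Lemma c1 : (conjc (1 : R[i]) * 1) = 1.
Proof. by rewrite conjc1 mulr1. Qed.
Lemma ci : (conjc ('i%C : R[i]) * 'i%C) = 1.
Proof. apply/eqP; rewrite eq_complex /=. by simpc. Qed.
Lemma c1i : (conjc (1 + 'i%C : R[i]) * ((2^-1 : R)%:C%C * (1 + 'i%C))) = 1.
Proof. apply/eqP; rewrite eq_complex /=. simpc; rewrite andbT; apply/eqP; by rewrite [RHS](splitr 1) mul1r. Qed.

Lemma colsum (T : pzSemiRingType) d (v : 'cV[T]_d) :
  v = \sum_(j < d) v j 0 *: delta_mx j 0.
Proof.
rewrite {1}(matrix_sum_delta v); apply: eq_bigr => j _.
by rewrite big_ord1.
Qed.
End Helpers.
Theorem proposition1 (R : realType) (d : nat) (H : lmodType R)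
    (ip : H -> H -> R) (S : 'cV[R[i]]_d -> H) (g : 'M[R]_2 -> H -> H) :
  (0 < d)%N ->
  is_real_hilbert ip ->
  (* (i) real-linearity *)
  (forall (phi psi : 'cV[R[i]]_d) (a b : R),
      S ((a%:C)%C *: phi + (b%:C)%C *: psi) = a *: S phi + b *: S psi) ->
  (* (ii) SO(2)-covariance *)
  is_SO2_rep ip g ->
  (forall (psi : 'cV[R[i]]_d) (alpha : R),
      S (eiang alpha *: psi) = g (rotation2 alpha) (S psi)) ->
  (* (iii) *)
  (forall phi psi : 'cV[R[i]]_d, cip phi psi = 0 -> ip (S phi) (S psi) = 0) ->
  (forall phi psi : 'cV[R[i]]_d, cip phi psi = 1 -> ip (S phi) (S psi) = 1) ->
  (* (iv) surjectivity *)
  (forall h : H, exists psi : 'cV[R[i]]_d, S psi = h) ->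
  (* H is isometrically isomorphic to R^d (x) R^2 via U, and ... *)
  exists U : 'M[R]_(d, 2) -> H,
    [/\ (forall (a : R) (A B : 'M[R]_(d, 2)), U (a *: A + B) = a *: U A + U B),
        bijective U,
        (forall A B : 'M[R]_(d, 2), ip (U A) (U B) = tens_ip A B) &
        exists (e : 'I_d -> 'cV[R[i]]_d) (et : 'I_d -> 'cV[R]_d),
          [/\ cONB e, rONB et &
              forall c : 'I_d -> R[i],
                S (\sum_(j < d) c j *: e j) =
                \sum_(j < d) ((complex.Re (c j) : R) *: U (tensor (et j) (@ketF R 0))
                              + (complex.Im (c j) : R) *: U (tensor (et j) (@ketF R 1)))]].

Proof.
move=> d0 [ipC ipL ip0 ipD _] Slin _ _ Sorth Sone Ssurj.
have C1 : (1%:C)%C = 1 :> R[i] by [].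
have SL a phi psi : S ((a%:C)%C *: phi + psi) = a *: S phi + S psi.
  by have := Slin phi psi a 1; rewrite C1 !scale1r.
have S0 : S 0 = 0.
  have := SL 1 0 0; rewrite scaler0 addr0 scale1r => h.
  by apply/(addrI (S 0)); rewrite addr0 -h.
have SD phi psi : S (phi + psi) = S phi + S psi.
  by have := SL 1 phi psi; rewrite C1 !scale1r.
have SZ a phi : S ((a%:C)%C *: phi) = a *: S phi.
  by have := SL a phi 0; rewrite !addr0 S0 addr0.
have ip0z z : ip 0 z = 0.
  have := ipL 1 0 0 z; rewrite scaler0 addr0 mul1r => h.
  by apply/(addrI (ip 0 z)); rewrite addr0 -h.
have ipDl x y z : ip (x + y) z = ip x z + ip y z.
  by have := ipL 1 x y z; rewrite scale1r mul1r.
have ipZl a x z : ip (a *: x) z = a * ip x z.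
  by have := ipL a x 0 z; rewrite addr0 ip0z addr0.
have ipDr x y z : ip z (x + y) = ip z x + ip z y.
  by rewrite ipC ipDl ![ip _ z]ipC.
have ipZr a x z : ip z (a *: x) = a * ip z x.
  by rewrite ipC ipZl ipC.
have ipsumL (F : 'I_d -> H) z : ip (\sum_(j < d) F j) z = \sum_(j < d) ip (F j) z.
  by apply: (big_morph (fun u => ip u z)); [move=> u v; apply: ipDl | apply: ip0z].
have ipsumR (F : 'I_d -> H) z : ip z (\sum_(j < d) F j) = \sum_(j < d) ip z (F j).
  by rewrite ipC ipsumL; apply: eq_bigr => j _; rewrite ipC.
pose E (j : 'I_d) : 'cV[R[i]]_d := delta_mx j 0.
pose x j := S (E j).
pose y j := S ('i%C *: E j).
have cipE' (a b : R[i]) (j k : 'I_d) : cip (a *: E j) (b *: E k) = (conjc a * b) * (j == k)%:R.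
  exact: cipE.
have xx j k : ip (x j) (x k) = (j == k)%:R.
  have := cipE' 1 1 j k; rewrite !scale1r c1 mul1r.
  case: eqVneq => [-> h|_ h]; [exact: Sone | exact: Sorth].
have yy j k : ip (y j) (y k) = (j == k)%:R.
  have := cipE' 'i%C 'i%C j k; rewrite ci mul1r.
  case: eqVneq => [-> h|_ h]; [exact: Sone | exact: Sorth].
have xy j k : ip (x j) (y k) = 0.
  case: (eqVneq j k) => [<-|ne]; last first.
    apply: Sorth; have := cipE' 1 'i%C j k; rewrite scale1r (negbTE ne) mulr0; exact.
  have := cipE' (1 + 'i%C) ((2^-1 : R)%:C%C * (1 + 'i%C)) j j.
  rewrite c1i eqxx mulr1 => /Sone.
  rewrite -scalerA SZ ipZr scalerDl scale1r SD ipDl !ipDr.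
  rewrite -/(x j) -/(y j) xx yy eqxx [ip (y j) (x j)]ipC.
  have e1 : (true%:R : R) = 1 by []. rewrite e1 => h; lra.
have yx j k : ip (y j) (x k) = 0 by rewrite ipC xy.
pose toC (A : 'M[R]_(d, 2)) : 'cV[R[i]]_d := \matrix_(j, k) Complex (A j 0) (A j 1).
pose U A := S (toC A).
have SE (c : 'I_d -> R[i]) : S (\sum_(j < d) c j *: E j) =
    \sum_(j < d) (complex.Re (c j) *: x j + complex.Im (c j) *: y j).
  apply: (big_ind2 (fun u v => S u = v)) => //.
  move=> u1 v1 u2 v2 h1 h2; rewrite SD h1 h2 //.
  move=> j _; rewrite {1}(decC _ (c j)) scalerDl -scalerA SD !SZ //.
have Uexp A : U A = \sum_(j < d) (A j 0 *: x j + A j 1 *: y j).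
  rewrite /U {1}(@colsum _ _ (toC A)) SE; apply: eq_bigr => j _.
  by rewrite mxE.
have Ulin a A B : U (a *: A + B) = a *: U A + U B.
  rewrite !Uexp scaler_sumr -big_split /=; apply: eq_bigr => j _.
  rewrite !mxE !scalerDl !scalerDr !scalerA. 
  by rewrite addrACA.
have Uiso A B : ip (U A) (U B) = tens_ip A B.
  rewrite !Uexp ipsumL /tens_ip; apply: eq_bigr => j _.
  rewrite ipsumR (bigD1 j) //= big1 ?addr0.
    rewrite !ipDl !ipDr !ipZl !ipZr xx yy xy yx eqxx.
    rewrite !big_ord_recl big_ord0 !mulr1 !mulr0 !addr0 add0r.
    have -> : (lift ord0 ord0 : 'I_2) = 1 by apply/val_inj.
    by have -> : (ord0 : 'I_2) = 0 by apply/val_inj.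
  move=> k /negbTE nk; rewrite !ipDl !ipDr !ipZl !ipZr xx yy xy yx eq_sym nk.
  by rewrite !mulr0 !addr0.
have tens0 X : tens_ip X X = 0 -> X = 0.
  move=> h; apply/matrixP => j k; rewrite mxE.
  have hge i : 0 <= \sum_(k < 2) X i k * X i k.
    by apply: sumr_ge0 => l _; rewrite -expr2 sqr_ge0.
  have h1 := @psumr_eq0P _ _ _ _ (fun i _ => hge i) h j isT.
  have h2 : X j k * X j k = 0.
    by apply: (psumr_eq0P _ h1) => // l _; rewrite -expr2 sqr_ge0.
  by move/eqP: h2; rewrite -expr2 sqrf_eq0 => /eqP.
have Uinj : injective U.
  move=> A B hAB; apply/eqP; rewrite -subr_eq0; apply/eqP; apply: tens0.
  rewrite -Uiso addrC -scaleN1r Ulin hAB scaleN1r addNr ip0z //.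
have ex h : exists psi, S psi == h by have [psi <-] := Ssurj h; exists psi.
pose toM (psi : 'cV[R[i]]_d) : 'M[R]_(d, 2) :=
  \matrix_(j, k) if k == 0 then complex.Re (psi j 0) else complex.Im (psi j 0).
have toCM psi : toC (toM psi) = psi.
  apply/matrixP => a b; rewrite !mxE ord1 /=; by case: (psi a 0).
exists U; split.
- exact: Ulin.
- exists (fun h => toM (xchoose (ex h))).
    move=> A; apply: Uinj; rewrite /U toCM; exact/eqP/(xchooseP (ex (U A))).
  by move=> h; rewrite /U toCM; exact/eqP/(xchooseP (ex h)).
- exact: Uiso.
exists E, (fun j => delta_mx j 0); split.
- split.
    by move=> j k; have := cipE' 1 1 j k; rewrite !scale1r c1 mul1r.
  by move=> v; exists (fun j => v j 0); exact: (@colsum _ _ v).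
- split.
    move=> j k; rewrite (bigD1 j) //= big1 ?addr0.
      by rewrite !mxE eqxx /= mul1r andbT eq_sym.
    by move=> l /negbTE nl; rewrite !mxE nl mul0r.
  by move=> v; exists (fun j => v j 0); exact: (@colsum _ _ v).
- move=> c; rewrite SE; apply: eq_bigr => j _.
  rewrite /tensor /ketF !trmx_delta !mul_delta_mx !Uexp.
  rewrite (bigD1 j) //= big1 ?addr0; last first.
    by move=> l /negbTE nl; rewrite !mxE nl /= !scale0r addr0.
  rewrite (bigD1 j) //= [X in _ = _ + _ *: (_ + X)]big1 ?addr0; last first.
    by move=> l /negbTE nl; rewrite !mxE nl /= !scale0r addr0.
  by rewrite !mxE eqxx /= !scale1r !scale0r !addr0 add0r.
Qed.
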